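(* Let $\alpha>0$, $\alpha\neq1$. For every unitary $U\in\mathcal{U}(d)$, $H_\alpha(U)=0$ if and only if $U$ belongs to the Clifford group $\mathcal{C}_n(d_L)$.
   Context: Let $d_L\ge 2$, $n\ge1$, $d=d_L^n$. On $\mathbb{C}^{d_L}$ with computational basis $\{|k\rangle\}_{k\in\mathbb{Z}_{d_L}}$, let $Z|k\rangle=\omega^k|k\rangle$, $X|k\rangle=|k+1\rangle$ (mod $d_L$), $\omega=e^{2\pi i/d_L}$, $\tau=-e^{i\pi/d_L}$, $D_{(a_1,a_2)}=\tau^{a_1a_2}X^{a_1}Z^{a_2}$, and for $\mathbf a=\mathbf a_1\oplus\cdots\oplus\mathbf a_n\in\mathbb{Z}_{d_L}^{2n}$ let $D_{\mathbf a}=D_{\mathbf a_1}\otimes\cdots\otimes D_{\mathbf a_n}$ acting on $\mathbb{C}^d$. The Clifford group $\mathcal{C}_n(d_L)$ is the set of unitaries $C$ on $\mathbb{C}^d$ such that for every $\mathbf a$ there exist $s\in\mathbb{Z}_{d_L}$ and $\mathbf a'$ with $CD_{\mathbf a}C^\dagger=\omega^sD_{\mathbf a'}$. For a unitary $U$ let $\mathfrak{C}_{\mathbf{ab}}(U)=\frac1d\operatorname{tr}(D_{\mathbf a}^\dagger UD_{\mathbf b}U^\dagger)$, $\mathfrak{D}_{\mathbf{ab}}(U)=|\mathfrak{C}_{\mathbf{ab}}(U)|^2$, and the $\alpha$-Clifford entropy $H_\alpha(U)=\frac{1}{\alpha-1}\Big(1-\frac{1}{d^2}\sum_{\mathbf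 a,\mathbf b\in\mathbb{Z}_{d_L}^{2n}}\mathfrak{D}_{\mathbf{ab}}(U)^\alpha\Big)$. *)

(* Defs.v *)
From HB Require Import structures.
From mathcomp Require Import all_boot all_order all_algebra.
From mathcomp Require Import all_classical all_reals.
From mathcomp Require Import exp trigo.
From mathcomp Require Import complex.
Set Implicit Arguments. Unset Strict Implicit. Unset Printing Implicit Defensive.
Import Order.TTheory GRing.Theory Num.Theory.
Local Open Scope ring_scope.

Section Clifford.
Variables (R : realType) (dL n : nat).

Local Notation C := R[i].

Definition expi (t : R) : C := Complex (cos t) (sin t).
Definition omega : C := expi (2 * pi / dL%:R).
Definition tau : C := - expi (pi / dL%:R).

(* basis labels of C^d, d = dL^n : tuples (k_1,...,k_n) in Z_dL^n *)
Definition basisT := {ffun 'I_n -> 'I_dL}.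
(* phase-space points a = a_1 (+) ... (+) a_n in Z_dL^{2n}, a_j = (a_j1, a_j2) *)
Definition phaseT := {ffun 'I_n -> 'I_dL * 'I_dL}.

Definition dim := #|{: basisT}|.
Definition Mat := 'M[C]_dim.

(* matrix entry <j| D_(a1,a2) |k> on a single qudit:
   D_(a1,a2) = tau^(a1 a2) X^a1 Z^a2, X^a1 Z^a2 |k> = omega^(a2 k) |k + a1 mod dL> *)
Definition D1 (a : 'I_dL * 'I_dL) (j k : 'I_dL) : C :=
  tau ^+ (a.1 * a.2)%N * omega ^+ (a.2 * k)%N *
  ((nat_of_ord j == (k + a.1) %% dL)%N)%:R.

(* D_a = D_{a_1} (x) ... (x) D_{a_n}, written in the product basis *)
Definition Dop (a : phaseT) : Mat :=
  \matrix_(i, j) let x : basisT := enum_val i in let y : basisT := enum_val j in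
    \prod_(l < n) D1 (a l) (x l) (y l).

Definition adj (M : Mat) : Mat := map_mx conjc (M^T).

Definition unitary (U : Mat) : Prop := U *m adj U = 1%:M.

Definition clifford (U : Mat) : Prop :=
  unitary U /\
  forall a : phaseT, exists (s : 'I_dL) (a' : phaseT),
    U *m Dop a *m adj U = omega ^+ s *: Dop a'.

Definition Cab (U : Mat) (a b : phaseT) : C :=
  (dim%:R)^-1 * \tr (adj (Dop a) *m U *m Dop b *m adj U).

Definition Dab (U : Mat) (a b : phaseT) : R := Normc.normc (Cab U a b) ^+ 2.

Definition Halpha (alpha : R) (U : Mat) : R :=
  (alpha - 1)^-1 *
  (1 - (dim%:R ^+ 2)^-1 * \sum_(a : phaseT) \sum_(b : phaseT) Dab U a b `^ alpha).

End Clifford.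

(* Main.v *)
Require Import Defs.
From HB Require Import structures.
From mathcomp Require Import all_boot all_order all_algebra.
From mathcomp Require Import all_classical all_reals.
From mathcomp Require Import exp trigo.
From mathcomp Require Import complex.
From mathcomp Require Import ring lra.
Import Order.TTheory GRing.Theory Num.Theory.
Local Open Scope ring_scope.
Set Implicit Arguments. Unset Strict Implicit. Unset Printing Implicit Defensive.

Section S.
Variable R : realType.
Local Notation C := R[i].
Variable dL : nat.
Hypothesis hdL : (1 < dL)%N.

Lemma expiD (a b : R) : expi a * expi b = expi (a + b).
Proof. rewrite /expi cosD sinD; simpc. congr Complex; ring. Qed.

Lemma expi0 : expi (0:R) = 1.
Proof. by rewrite /expi cos0 sin0. Qed.

Lemma expiX (a : R) k : expi a ^+ k = expi (a *+ k).
Proof. elim: k => [|k IH]; first by rewrite expr0 mulr0n expi0.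
by rewrite exprS IH expiD mulrS. Qed.

Lemma expiJ (a : R) : (expi a)^*%C * expi a = 1.
Proof. rewrite /expi; simpc. have := cos2Dsin2 a. rewrite !expr2 => h. congr Complex. rewrite -h; ring. ring. Qed.

Lemma dL_neq0 : (dL%:R : R) != 0.
Proof. by rewrite pnatr_eq0 -lt0n ltnW. Qed.

Lemma mulrn_div (x : R) : x / dL%:R *+ dL = x.
Proof. by rewrite -(mulr_natr (x / dL%:R)) divfK ?dL_neq0. Qed.

Lemma omega_dL : omega R dL ^+ dL = 1.
Proof. rewrite /omega expiX mulrn_div.
by rewrite /expi mulr_natl cos2pi sin2pi. Qed.

Lemma tau2 : tau R dL ^+ 2 = omega R dL.
Proof. rewrite /tau sqrrN expiX /omega; congr expi.
rewrite -(mulr_natr (pi / dL%:R)); field. exact: dL_neq0. Qed.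

Lemma tau_dL : tau R dL ^+ dL = - (-1) ^+ dL.
Proof. rewrite /tau -(mulN1r (expi _)) exprMn expiX mulrn_div.
rewrite /expi cospi sinpi.
have -> : Complex (-1) 0 = -1 :> C by apply/eqP; rewrite eq_complex /= oppr0 !eqxx.
by rewrite mulrN1. Qed.

Lemma tauJ e : ((tau R dL) ^+ e)^*%C * (tau R dL) ^+ e = 1.
Proof. have h : forall x : C, (- x)^*%C = - x^*%C by exact: raddfN.
have t1 : (tau R dL)^*%C * tau R dL = 1 by rewrite /tau h mulrNN expiJ.
by rewrite rmorphXn -exprMn t1 expr1n. Qed.

Lemma expi_neq1 (x : R) : 0 < x < pi *+ 2 -> expi x != 1.
Proof.
move=> /andP[x0 x2]; apply/negP => /eqP [] hc hs.
have [xpi|xpi|xpi] := ltgtP x pi.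
- by have := @sin_gt0_pi R x; rewrite x0 xpi hs ltxx => /(_ isT).
- have : sin (x - pi + pi) < 0.
    rewrite sinDpi oppr_lt0; apply: sin_gt0_pi.
    rewrite subr_gt0 xpi /= ltrBlDr -mulr2n //.
  by rewrite subrK hs ltxx.
- by move: hc; rewrite xpi cospi; lra.
Qed.

Lemma omega_prim : dL.-primitive_root (omega R dL).
Proof.
have [m pm mdL] := prim_order_exists (ltnW hdL) omega_dL.
have m0 := prim_order_gt0 pm.
have mle := dvdn_leq (ltnW hdL) mdL.
suff e : m = dL by move: pm; rewrite e.
apply/eqP; rewrite eqn_leq mle /= leqNgt; apply/negP => mlt.
have := prim_expr_order pm; rewrite /omega expiX; apply/eqP/expi_neq1.
have pi0 := pi_gt0 R.
have dL0 : (0:R) < dL%:R by rewrite ltr0n ltnW.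
apply/andP; split.
  by rewrite pmulrn_rgt0 // divr_gt0 // mulr_gt0.
have key : forall x : R, x *+ m = x * m%:R := fun x => esym (mulr_natr x m).
rewrite key mulrAC ltr_pdivrMr // mulr2n.
have : (m%:R:R) + 1 <= dL%:R by rewrite natr1 ler_nat.
nra.
Qed.
Lemma conjcM (x y : R[i]) : (x * y)^*%C = x^*%C * y^*%C.
Proof. exact: rmorphM. Qed.
Lemma conjcX (x : R[i]) k : (x ^+ k)^*%C = x^*%C ^+ k.
Proof. exact: rmorphXn. Qed.
Lemma conjcD (x y : R[i]) : (x + y)^*%C = x^*%C + y^*%C.
Proof. exact: rmorphD. Qed.
Lemma conjcN (x : R[i]) : (- x)^*%C = - x^*%C.
Proof. exact: rmorphN. Qed.
Lemma conjcn k : (k%:R : R[i])^*%C = k%:R.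
Proof. exact: conjc_nat. Qed.
Lemma conjc_sum (I : finType) (F : I -> R[i]) : (\sum_i F i)^*%C = \sum_i (F i)^*%C.
Proof. exact: rmorph_sum. Qed.
Lemma conjc_prod (I : finType) (F : I -> R[i]) : (\prod_i F i)^*%C = \prod_i (F i)^*%C.
Proof. exact: rmorph_prod. Qed.
Lemma conjcK' (x : R[i]) : (x^*%C)^*%C = x.
Proof. exact: conjcK. Qed.
Lemma normc2 (x : R[i]) : real_complex R ((Normc.normc x) ^+ 2) = x * x^*%C.
Proof. rewrite -sqr_normc. by rewrite rmorphXn. Qed.
End S.

Section B.
Variable R : realType.
Local Notation C := R[i].
Variable dL : nat.
Hypothesis hdL : (1 < dL)%N.
Local Notation om := (omega R dL).
Local Notation ta := (tau R dL).

Lemma geom0 (z : C) : z ^+ dL = 1 -> z != 1 -> \sum_(k < dL) z ^+ k = 0.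
Proof.
move=> zd z1; have := subrX1 z dL; rewrite zd subrr => /esym/eqP.
by rewrite mulf_eq0 subr_eq0 (negbTE z1) /= => /eqP.
Qed.

Lemma omX i : om ^+ i = ta ^+ (2 * i).
Proof. by rewrite exprM tau2. Qed.

Lemma omJ i : (om ^+ i)^*%C * om ^+ i = 1.
Proof. by rewrite omX tauJ. Qed.

Lemma om_neq0 i : om ^+ i != 0.
Proof. apply/eqP => h; have := omJ i; rewrite h mulr0 => /eqP; by rewrite eq_sym oner_eq0. Qed.

Lemma omJV i : (om ^+ i)^*%C = (om ^+ i)^-1.
Proof. by apply: (mulIf (om_neq0 i)); rewrite omJ mulVf ?om_neq0. Qed.

Lemma charsum (i j : 'I_dL) :
  \sum_(k < dL) (om ^+ i) ^+ k * ((om ^+ j) ^+ k)^*%C = (i == j)%:R * dL%:R.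
Proof.
have -> : \sum_(k < dL) (om ^+ i) ^+ k * ((om ^+ j) ^+ k)^*%C
        = \sum_(k < dL) (om ^+ i / om ^+ j) ^+ k.
  by apply: eq_bigr => k _; rewrite conjcX omJV exprMn exprVn.
have [<-|ij] := eqVneq i j.
  rewrite divff ?om_neq0 // mul1r.
  under eq_bigr do rewrite expr1n.
  by rewrite sumr_const card_ord.
rewrite mul0r; apply: geom0.
  rewrite exprMn exprVn -!exprM mulnC exprM omega_dL // expr1n.
  by rewrite mulnC exprM omega_dL // expr1n invr1 mulr1.
apply/negP => /eqP h.
have : om ^+ i = om ^+ j by apply: (mulIf (invr_neq0 (om_neq0 j))); rewrite h mulfV ?om_neq0.
move/eqP; rewrite (eq_prim_root_expr (omega_prim R hdL)) !modn_small //.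
by move/eqP/val_inj => e; rewrite e eqxx in ij.
Qed.

Lemma sum_ind (t : nat) (ht : (t < dL)%N) (F : 'I_dL -> C) :
  \sum_(j < dL) ((j:nat) == t)%:R * F j = F (Ordinal ht).
Proof.
rewrite (bigD1 (Ordinal ht)) //= eqxx mul1r big1 ?addr0 // => j.
by rewrite -val_eqE /= => /negbTE ->; rewrite mul0r.
Qed.

Lemma sum_ind' (t : nat) (ht : (t < dL)%N) (F : 'I_dL -> C) :
  \sum_(j < dL) F j * ((j:nat) == t)%:R = F (Ordinal ht).
Proof. rewrite -(sum_ind ht); apply: eq_bigr => j _; exact: mulrC. Qed.

Lemma modlt m : (m %% dL < dL)%N.
Proof. by rewrite ltn_pmod // ltnW. Qed.

Lemma ortho1 (a b : 'I_dL * 'I_dL) :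
  \sum_(j < dL) \sum_(k < dL) (D1 R a j k)^*%C * D1 R b j k = (a == b)%:R * dL%:R.
Proof.
rewrite exchange_big /=.
under eq_bigr => k _.
  under eq_bigr => j _.
    rewrite /D1 !conjcM conjcn.
    rewrite [X in X * _]mulrC -mulrA [X in _ * X]mulrC -!mulrA.
    over.
  rewrite /= (sum_ind (modlt _)) /= mulrA.
  over.
rewrite /=.
case: a b => a1 a2 [b1 b2] /=.
have [e1|n1] := eqVneq a1 b1; last first.
  rewrite big1; last first.
    move=> k _; rewrite eqn_modDl.
    by rewrite !modn_small ?ltn_ord // (negbTE n1 : ((a1:nat) == b1) = false) /= mul0r !mulr0.
  by rewrite xpair_eqE (negbTE n1) mul0r.
subst b1; rewrite xpair_eqE eqxx /=.
have tr1 : (true%:R : C) = 1 by [].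
rewrite (eq_bigr (fun k : 'I_dL => ((ta ^+ (a1 * a2))^*%C * ta ^+ (a1 * b2)) *
            ((om ^+ b2) ^+ k * ((om ^+ a2) ^+ k)^*%C))); last first.
  move=> k _; rewrite eqxx tr1 (exprM om b2 k) (exprM om a2 k); ring.
rewrite -mulr_sumr charsum.
have [e2|n2] := eqVneq b2 a2.
  by subst b2; rewrite tauJ mul1r.
by rewrite !mul0r mulr0.
Qed.

Lemma shift_ind (j k a1 : 'I_dL) :
  ((j:nat) == (k + a1) %% dL)%N = ((a1:nat) == (j + (dL - k)) %% dL)%N.
Proof.
have kd : (k <= dL)%N by apply: ltnW.
apply/eqP/eqP => ->.
  rewrite modnDml (_ : (k + a1 + (dL - k) = a1 + dL)%N); last by rewrite addnAC subnKC // addnC.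
  by rewrite modnDr modn_small ?ltn_ord.
rewrite modnDmr addnCA (addnC j) subnKC // modnDl modn_small ?ltn_ord //.
Qed.

Lemma compl1 (j k j' k' : 'I_dL) :
  \sum_(a : 'I_dL * 'I_dL) D1 R a j k * (D1 R a j' k')^*%C
    = ((j == j') && (k == k'))%:R * dL%:R.
Proof.
rewrite -(pair_bigA _ (fun a1 a2 => D1 R (a1, a2) j k * (D1 R (a1, a2) j' k')^*%C)) /=.
rewrite (eq_bigr (fun a1 : 'I_dL => (((j:nat) == (k + a1) %% dL)%N)%:R * (((j':nat) == (k' + a1) %% dL)%N)%:R *
     \sum_(a2 < dL) (om ^+ k) ^+ a2 * ((om ^+ k') ^+ a2)^*%C)); last first.
  move=> a1 _; rewrite mulr_sumr; apply: eq_bigr => a2 _.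
  rewrite /D1 /= !conjcM conjcn -(exprM om k a2) -(exprM om k' a2) (mulnC k) (mulnC k').
  have := tauJ R dL (a1 * a2); set T := ta ^+ _; set T' := (T)^*%C => hT.
  set X := om ^+ _; set Y := (om ^+ _)^*%C.
  have e : forall u v : C, T * X * u * (T' * Y * v) = u * v * (X * Y).
    by move=> u v; rewrite -[u * v]mul1r -hT; ring.
  exact: e.
under eq_bigr do rewrite charsum.
have [ekk|nkk] := eqVneq k k'; last first.
  by rewrite andbF /= mul0r big1 // => a1 _; rewrite mulr0.
subst k'; rewrite andbT -mulr_suml.
have tr1 : (true%:R : C) = 1 by [].
rewrite tr1 mul1r; congr (_ * _).
under eq_bigr do rewrite shift_ind.
rewrite (sum_ind (modlt _)) /=.
congr ((nat_of_bool _)%:R).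
have kd : (k <= dL)%N by apply: ltnW.
rewrite modnDmr addnCA (addnC j) subnKC // modnDl modn_small ?ltn_ord //.
by rewrite eq_sym.
Qed.

Fixpoint fpow (f : 'I_dL -> 'I_dL -> C) (k : nat) : 'I_dL -> 'I_dL -> C :=
  match k with
  | 0 => fun s t => ((s == t)%:R : C)
  | k'.+1 => fun s t => \sum_(u < dL) f s u * fpow f k' u t
  end.

Lemma fpowS f k s t : fpow f k.+1 s t = \sum_(u < dL) f s u * fpow f k u t.
Proof. by []. Qed.
Lemma fpow0 f s t : fpow f 0 s t = (s == t)%:R.
Proof. by []. Qed.

Lemma D1pow (a : 'I_dL * 'I_dL) k (s t : 'I_dL) :
  fpow (D1 R a) k s t =
  ta ^+ (a.1 * a.2 * (k * k) + 2 * k * a.2 * t)%N * (((s:nat) == (t + k * a.1) %% dL)%N)%:R.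
Proof.
elim: k s t => [|k IH] s t.
  rewrite fpow0.
  by rewrite !muln0 !mul0n !addn0 modn_small ?ltn_ord // expr0 mul1r.
rewrite fpowS; under eq_bigr do rewrite IH /D1 mulrA.
rewrite (sum_ind' (modlt _)) /=.
rewrite modnDml -addnA -mulSnr mulrAC.
congr (_ * _).
rewrite (mulnC a.2 ((t + k * a.1) %% dL)%N) (exprM om) prim_expr_mod ?(omega_prim R hdL) // -exprM omX -!exprD.
congr (_ ^+ _).
ring.
Qed.

Lemma D1pow_dL (a : 'I_dL * 'I_dL) (s t : 'I_dL) :
  fpow (D1 R a) dL s t = (s == t)%:R.
Proof.
rewrite D1pow (addnC t) (mulnC dL a.1) modnMDl modn_small ?ltn_ord //.
have -> : (a.1 * a.2 * (dL * dL) + 2 * dL * a.2 * t = dL * (a.1 * a.2 * dL + 2 * a.2 * t))%N by ring.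
rewrite exprM tau_dL // -mulN1r -exprS -exprM -signr_odd.
have -> : odd (dL.+1 * (a.1 * a.2 * dL + 2 * a.2 * t)) = false.
  rewrite oddM oddD !oddM /=; by case: (odd dL); rewrite ?andbF.
by rewrite expr0 mul1r.
Qed.

End B.

Section C.
Variable R : realType.
Local Notation C := R[i].
Variables (dL n : nat).
Hypothesis hdL : (1 < dL)%N.
Local Notation d := (Defs.dim dL n).
Local Notation B := (basisT dL n).
Local Notation M := (Mat R dL n).

Lemma sum_ev (F : B -> C) : \sum_(i < d) F (enum_val i) = \sum_(x : B) F x.
Proof. by rewrite -(big_enum_val F). Qed.

Lemma prod_sum (F : 'I_n -> 'I_dL -> C) :
  \sum_(x : B) \prod_(l < n) F l (x l) = \prod_(l < n) \sum_(s < dL) F l s.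
Proof. by rewrite bigA_distr_bigA. Qed.

Definition tens (G : 'I_n -> 'I_dL -> 'I_dL -> C) : M :=
  \matrix_(i, j) \prod_(l < n) G l ((enum_val i : B) l) ((enum_val j : B) l).

Lemma Dop_tens (a : phaseT dL n) : Dop R a = tens (fun l => D1 R (a l)).
Proof. by apply/matrixP => i j; rewrite !mxE. Qed.

Lemma eq_tens F G : (forall l s t, F l s t = G l s t) -> tens F = tens G.
Proof. move=> h; apply/matrixP => i j; rewrite !mxE; apply: eq_bigr => l _; exact: h. Qed.

Lemma tens_mul F G :
  tens F *m tens G = tens (fun l s t => \sum_(u < dL) F l s u * G l u t).
Proof.
apply/matrixP => i j; rewrite !mxE.
rewrite (eq_bigr (fun k => \prod_(l < n) (F l ((enum_val i : B) l) ((enum_val k : B) l) *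
                                         G l ((enum_val k : B) l) ((enum_val j : B) l)))); last first.
  by move=> k _; rewrite !mxE -big_split.
rewrite (sum_ev (fun x : B => \prod_(l < n) (F l ((enum_val i : B) l) (x l) * G l (x l) ((enum_val j : B) l)))).
by rewrite (prod_sum (fun l u => F l ((enum_val i : B) l) u * G l u ((enum_val j : B) l))).
Qed.

Lemma tens_tr F : \tr (tens F) = \prod_(l < n) \sum_(s < dL) F l s s.
Proof.
rewrite /mxtrace.
rewrite (eq_bigr (fun i => \prod_(l < n) F l ((enum_val i : B) l) ((enum_val i : B) l))); last first.
  by move=> i _; rewrite mxE.
by rewrite (sum_ev (fun x : B => \prod_(l < n) F l (x l) (x l))) (prod_sum (fun l u => F l u u)).
Qed.

Lemma tens_adj F : adj (tens F) = tens (fun l s t => (F l t s)^*%C).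
Proof. by apply/matrixP => i j; rewrite !mxE conjc_prod. Qed.

Lemma prod_eq_ind (T : finType) (x y : {ffun 'I_n -> T}) :
  \prod_(l < n) ((x l == y l)%:R : C) = (x == y)%:R.
Proof.
have [->|nxy] := eqVneq x y.
  by rewrite big1 // => l _; rewrite eqxx.
have [l hl] : exists l, x l != y l.
  apply/existsP; apply: contraR nxy; rewrite negb_exists => /forallP h.
  by apply/eqP/ffunP => l; have := h l; rewrite negbK => /eqP.
by rewrite (bigD1 l) //= (negbTE hl) mul0r.
Qed.

Lemma tens_one : tens (fun l s t => ((s == t)%:R : C)) = 1%:M.
Proof.
apply/matrixP => i j; rewrite !mxE prod_eq_ind.
by rewrite (inj_eq enum_val_inj).
Qed.

Definition mpow (A : M) k := iter k (mulmx A) 1%:M.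

Lemma tens_pow F k : mpow (tens F) k = tens (fun l => fpow (F l) k).
Proof.
elim: k => [|k IH]; first by rewrite /mpow /= -tens_one; apply: eq_tens.
by rewrite /mpow iterS -/(mpow _ k) IH tens_mul; apply: eq_tens.
Qed.

Lemma Dop_pow_dL (a : phaseT dL n) : mpow (Dop R a) dL = 1%:M.
Proof.
rewrite Dop_tens tens_pow -tens_one; apply: eq_tens => l s t.
exact: D1pow_dL.
Qed.

Lemma card_B : #|{: B}| = (dL ^ n)%N.
Proof. by rewrite card_ffun !card_ord. Qed.

Lemma ortho (a b : phaseT dL n) : \tr (adj (Dop R a) *m Dop R b) = (a == b)%:R * d%:R.
Proof.
rewrite !Dop_tens tens_adj tens_mul tens_tr.
under eq_bigr do rewrite exchange_big /= ortho1 //.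
rewrite big_split /= prod_eq_ind prodr_const card_ord.
by rewrite /Defs.dim card_B natrX.
Qed.

Lemma compl (x y x' y' : 'I_d) :
  \sum_(a : phaseT dL n) Dop R a x y * (Dop R a x' y')^*%C
    = ((x == x') && (y == y'))%:R * d%:R.
Proof.
under eq_bigr do rewrite !mxE conjc_prod -big_split /=.
rewrite -(bigA_distr_bigA (fun l (p : 'I_dL * 'I_dL) => D1 R p ((enum_val x : B) l) ((enum_val y : B) l) *
           (D1 R p ((enum_val x' : B) l) ((enum_val y' : B) l))^*%C)).
under eq_bigr do rewrite compl1 // -mulnb natrM.
rewrite big_split /= big_split /= !prod_eq_ind prodr_const card_ord.
have -> : (d%:R : C) = dL%:R ^+ n by rewrite /Defs.dim card_B natrX.
rewrite !(inj_eq enum_val_inj).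
by case: (x == x'); case: (y == y'); rewrite /= ?mul1r ?mul0r.
Qed.

End C.

Section D.
Variable R : realType.
Local Notation C := R[i].
Variables (dL n : nat).
Hypothesis hdL : (1 < dL)%N.
Local Notation d := (Defs.dim dL n).
Local Notation B := (basisT dL n).
Local Notation M := (Mat R dL n).
Local Notation P := (phaseT dL n).
Local Notation I2 := ('I_d * 'I_d)%type.

Lemma tr_adj_mul (A Bm : M) :
  \tr (adj A *m Bm) = \sum_(p : I2) (A p.1 p.2)^*%C * Bm p.1 p.2.
Proof.
rewrite -(pair_bigA _ (fun x y => (A x y)^*%C * Bm x y)) /mxtrace exchange_big /=.
apply: eq_bigr => x _; rewrite mxE; apply: eq_bigr => y _.
by rewrite !mxE.
Qed.

Lemma adjD (A Bm : M) : adj (A + Bm) = adj A + adj Bm.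
Proof. by apply/matrixP => i j; rewrite !mxE conjcD. Qed.
Lemma adjN (A : M) : adj (- A) = - adj A.
Proof. by apply/matrixP => i j; rewrite !mxE conjcN. Qed.
Lemma adjZ c (A : M) : adj (c *: A) = c^*%C *: adj A.
Proof. by apply/matrixP => i j; rewrite !mxE conjcM. Qed.
Lemma adjM (A Bm : M) : adj (A *m Bm) = adj Bm *m adj A.
Proof.
apply/matrixP => i j; rewrite !mxE conjc_sum; apply: eq_bigr => k _.
by rewrite !mxE conjcM mulrC.
Qed.
Lemma adjK (A : M) : adj (adj A) = A.
Proof. by apply/matrixP => i j; rewrite !mxE conjcK. Qed.
Lemma tr_adj (A : M) : \tr (adj A) = (\tr A)^*%C.
Proof. by rewrite /mxtrace conjc_sum; apply: eq_bigr => i _; rewrite !mxE. Qed.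

Lemma parseval (A : M) :
  \sum_(a : P) \tr (adj (Dop R a) *m A) * (\tr (adj (Dop R a) *m A))^*%C
    = d%:R * \sum_(p : I2) (A p.1 p.2)^*%C * A p.1 p.2.
Proof.
under eq_bigr do rewrite tr_adj_mul conjc_sum mulr_suml.
rewrite exchange_big /= mulr_sumr; apply: eq_bigr => p _.
under eq_bigr do rewrite mulr_sumr.
rewrite exchange_big /=.
rewrite (bigD1 p) //= [X in _ + X]big1 ?addr0; last first.
  move=> q qp.
  rewrite (eq_bigr (fun a : P => (A p.1 p.2 * (A q.1 q.2)^*%C) *
       (Dop R a q.1 q.2 * (Dop R a p.1 p.2)^*%C))); last first.
    by move=> a _; rewrite conjcM conjcK; ring.
  rewrite -mulr_sumr compl //.
  have -> : ((q.1 == p.1) && (q.2 == p.2)) = false.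
    by apply/negbTE; rewrite -xpair_eqE -!surjective_pairing.
  by rewrite mul0r mulr0.
rewrite (eq_bigr (fun a : P => (A p.1 p.2 * (A p.1 p.2)^*%C) *
       (Dop R a p.1 p.2 * (Dop R a p.1 p.2)^*%C))); last first.
  by move=> a _; rewrite conjcM conjcK; ring.
rewrite -mulr_sumr compl // !eqxx mul1r mulrC; congr (_ * _); exact: mulrC.
Qed.

Lemma trN (A : M) : \tr (- A) = - \tr A.
Proof. exact: raddfN. Qed.

Lemma cs_eq (Y D : M) (c : C) :
  \tr (adj D *m D) = d%:R -> \tr (adj Y *m Y) = d%:R ->
  \tr (adj D *m Y) = d%:R * c -> c * c^*%C = 1 -> Y = c *: D.
Proof.
move=> hD hY hDY hc.
have hYD : \tr (adj Y *m D) = d%:R * c^*%C.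
  have e : adj (adj D *m Y) = adj Y *m D by rewrite adjM adjK.
  by rewrite -e tr_adj hDY conjcM conjcn.
set E := Y - c *: D.
have h0 : \tr (adj E *m E) = 0.
  rewrite /E adjD adjN adjZ !mulmxDl !mulmxDr !mulNmx !mulmxN -!scalemxAl -!scalemxAr.
  rewrite !mxtraceD !trN !mxtraceZ hD hY hDY hYD.
  transitivity (d%:R * (1 - c * c^*%C)); first ring.
  by rewrite hc subrr mulr0.
apply/matrixP => x y.
move: h0; rewrite tr_adj_mul => /psumr_eq0P h.
have h2 := h (fun p _ => ltac:(by rewrite mulrC mulcJ_ge0)) (x, y) isT.
move: h2 => /= /eqP; rewrite mulf_eq0 conjc_eq0 orbb !mxE subr_eq0 => /eqP ->.
by [].
Qed.

Lemma adjU (U : M) : unitary U -> adj U *m U = 1%:M.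
Proof. exact: mulmx1C. Qed.

Definition Ymx (U : M) (b : P) : M := U *m Dop R b *m adj U.

Lemma conj_tr (U X : M) : unitary U -> \tr (U *m X *m adj U) = \tr X.
Proof. by move=> hU; rewrite mxtrace_mulC mulmxA adjU // mul1mx. Qed.

Lemma trDD (a : P) : \tr (adj (Dop R a) *m Dop R a) = d%:R.
Proof. by rewrite ortho // eqxx mul1r. Qed.

Lemma trYY (U : M) b : unitary U -> \tr (adj (Ymx U b) *m Ymx U b) = d%:R.
Proof.
move=> hU.
have -> : adj (Ymx U b) *m Ymx U b = U *m (adj (Dop R b) *m Dop R b) *m adj U.
  rewrite /Ymx !adjM adjK !mulmxA; congr (_ *m _).
  by rewrite -(mulmxA _ (adj U) U) adjU // mulmx1.
by rewrite conj_tr // trDD.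
Qed.

Lemma Cab_Y (U : M) a b : Cab U a b = d%:R^-1 * \tr (adj (Dop R a) *m Ymx U b).
Proof. by rewrite /Cab /Ymx !mulmxA. Qed.

Lemma d_gt0 : (0 < d)%N.
Proof. by rewrite /Defs.dim card_B expn_gt0 ltnW. Qed.

Lemma d_neq0 : (d%:R : C) != 0.
Proof. by rewrite pnatr_eq0 -lt0n d_gt0. Qed.

Lemma sumC (U : M) b : unitary U -> \sum_(a : P) Cab U a b * (Cab U a b)^*%C = 1.
Proof.
move=> hU.
under eq_bigr do rewrite Cab_Y conjcM conjc_inv conjcn mulrACA.
rewrite -mulr_sumr parseval -tr_adj_mul trYY //.
by field; rewrite d_neq0.
Qed.

Lemma Dab_C (U : M) a b : real_complex R (Dab U a b) = Cab U a b * (Cab U a b)^*%C.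
Proof. exact: normc2. Qed.

Lemma sumD (U : M) b : unitary U -> \sum_(a : P) Dab U a b = 1.
Proof.
move=> hU; apply: (@complexI R).
rewrite rmorph_sum /=.
under eq_bigr do rewrite Dab_C.
by rewrite sumC.
Qed.

End D.

Section E.
Variable R : realType.
Local Notation C := R[i].
Variables (dL n : nat).
Hypothesis hdL : (1 < dL)%N.
Local Notation d := (Defs.dim dL n).
Local Notation B := (basisT dL n).
Local Notation M := (Mat R dL n).
Local Notation P := (phaseT dL n).

Lemma Dab_ge0 (U : M) a b : 0 <= Dab U a b.
Proof. exact: sqr_ge0. Qed.

Lemma Dab_le1 (U : M) a b : unitary U -> Dab U a b <= 1.
Proof.
move=> hU; rewrite -(sumD hdL b hU) (bigD1 a) //= lerDl.
by apply: sumr_ge0 => i _; exact: Dab_ge0.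
Qed.

Lemma card_P : #|{: P}| = (d ^ 2)%N.
Proof. by rewrite card_ffun card_prod !card_ord /Defs.dim card_B expnMn mulnn. Qed.

Lemma sumDD (U : M) : unitary U -> \sum_(a : P) \sum_(b : P) Dab U a b = d%:R ^+ 2.
Proof.
move=> hU; rewrite exchange_big /=.
under eq_bigr do rewrite sumD //.
by rewrite sumr_const card_P natrX.
Qed.

Lemma mpow_conj (U X : M) k : unitary U -> mpow (U *m X *m adj U) k = U *m mpow X k *m adj U.
Proof.
move=> hU; elim: k => [|k IH].
  by rewrite /mpow /= mulmx1 hU.
rewrite /mpow iterS -/(mpow _ k) IH !mulmxA; congr (_ *m _).
by rewrite -(mulmxA _ (adj U) U) adjU // mulmx1.
Qed.

Lemma mpow_scale c (X : M) k : mpow (c *: X) k = c ^+ k *: mpow X k.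
Proof.
elim: k => [|k IH]; first by rewrite /mpow /= expr0 scale1r.
by rewrite /mpow iterS -/(mpow _ k) IH -scalemxAl -scalemxAr scalerA exprS.
Qed.

Lemma forward_b (U : M) a b : unitary U -> Dab U a b = 1 ->
  exists s : 'I_dL, U *m Dop R b *m adj U = omega R dL ^+ s *: Dop R a.
Proof.
move=> hU hab.
set c := Cab U a b.
have hc : c * c^*%C = 1 by rewrite -Dab_C hab.
have hY : Ymx U b = c *: Dop R a.
  apply: cs_eq; rewrite ?trDD ?trYY //.
  rewrite /c Cab_Y mulrA divff ?mul1r //; exact: d_neq0.
have hp : c ^+ dL = 1.
  have := mpow_conj (Dop R b) dL hU.
  rewrite Dop_pow_dL // mulmx1 hU -/(Ymx U b) hY mpow_scale Dop_pow_dL // => /matrixP h.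
  have := h (Ordinal (@d_gt0 dL n hdL)) (Ordinal (@d_gt0 dL n hdL)); rewrite !mxE eqxx mulr1 => ->.
  by [].
have [s hs] := prim_rootP (omega_prim R hdL) hp.
by exists s; rewrite -hs.
Qed.

Lemma Dab_cliff (U : M) : clifford U -> forall a b, Dab U a b = 0 \/ Dab U a b = 1.
Proof.
move=> [hU hcl] a b; have [s [a' h]] := hcl b.
have hC : Cab U a b = omega R dL ^+ s * (a == a')%:R.
  rewrite Cab_Y /Ymx h -scalemxAr mxtraceZ ortho // mulrCA [_ * d%:R]mulrC mulKf //.
  exact: d_neq0.
have := Dab_C U a b; rewrite hC conjcM conjcn.
case: (a == a') => /=.
  rewrite !mulr1 mulrC omJ // => h1; right; apply: (@complexI R); by rewrite h1.
rewrite !mulr0 => h1; left; apply: (@complexI R); by rewrite h1.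
Qed.

Lemma pow_fix (alpha x : R) : 0 < alpha -> alpha != 1 -> 0 <= x <= 1 ->
  x `^ alpha = x -> x = 0 \/ x = 1.
Proof.
move=> a0 a1 /andP[x0 x1] hx.
have [->|nx0] := eqVneq x 0; first by left.
have [->|nx1] := eqVneq x 1; first by right.
exfalso.
have hpos : 0 < x by rewrite lt_def nx0 x0.
have : x `^ (alpha - 1) == 1.
  rewrite powRB; last by rewrite nx0 implybT.
  by rewrite hx powRr1 // divff.
rewrite powR_eq1 (negbTE nx1) /= ltNge x0 /= subr_eq0.
by rewrite (negbTE a1).
Qed.

Lemma powR_01 (alpha x : R) : 0 < alpha -> (x = 0 \/ x = 1) -> x `^ alpha = x.
Proof.
move=> a0 [->|->]; first by rewrite powR0 // gt_eqF.
by rewrite powR1.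
Qed.

Lemma theorem1_gen (alpha : R) (halpha0 : 0 < alpha) (halpha1 : alpha != 1)
  (U : M) (hU : unitary U) :
  Halpha alpha U = 0 <-> clifford U.
Proof.
have dn0 : (d%:R : R) ^+ 2 != 0 by rewrite expf_neq0 // pnatr_eq0 -lt0n d_gt0.
have am1 : alpha - 1 != 0 by rewrite subr_eq0.
have key : Halpha alpha U = 0 <->
    \sum_(a : P) \sum_(b : P) Dab U a b `^ alpha = d%:R ^+ 2.
  rewrite /Halpha; split.
    move/eqP; rewrite mulf_eq0 invr_eq0 (negbTE am1) /= subr_eq0 => /eqP h.
    apply: (mulfI (invr_neq0 dn0)); by rewrite -h mulVf.
  by move=> ->; rewrite mulVf // subrr mulr0.
rewrite key; split; last first.
  move=> hc.
  rewrite -(sumDD hU); apply: eq_bigr => a _; apply: eq_bigr => b _.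
  exact: powR_01 (Dab_cliff hc a b).
move=> hS.
have h01 : forall a b, Dab U a b = 0 \/ Dab U a b = 1.
  have hdiff : \sum_(a : P) \sum_(b : P) (Dab U a b `^ alpha - Dab U a b) = 0.
    under eq_bigr do rewrite sumrB.
    by rewrite sumrB hS sumDD // subrr.
  have hb01 : forall a b, 0 <= Dab U a b <= 1.
    by move=> a b; rewrite Dab_ge0 Dab_le1.
  suff hf : forall a b, Dab U a b `^ alpha - Dab U a b = 0.
    move=> a b; apply: pow_fix halpha0 halpha1 (hb01 a b) _.
    by apply/eqP; rewrite -subr_eq0 hf.
  have [alt|agt|aeq] := ltgtP alpha 1; last by rewrite aeq eqxx in halpha1.
  -
    have hpos : forall a b, 0 <= Dab U a b `^ alpha - Dab U a b.
      move=> a b; rewrite subr_ge0.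
      have [->|nz] := eqVneq (Dab U a b) 0; first by rewrite powR0 // gt_eqF.
      apply: ger1_powR; last exact: ltW.
      by rewrite lt_def nz Dab_ge0 Dab_le1.
    move=> a b.
    have h1 : \sum_(b : P) (Dab U a b `^ alpha - Dab U a b) = 0.
      apply: (psumr_eq0P _ hdiff) => // a' _; apply: sumr_ge0 => b' _; exact: hpos.
    by apply: (psumr_eq0P _ h1) => // b' _; exact: hpos.
  - have hneg : forall a b, 0 <= - (Dab U a b `^ alpha - Dab U a b).
      move=> a b; rewrite oppr_ge0 subr_le0.
      have [->|nz] := eqVneq (Dab U a b) 0; first by rewrite powR0 // gt_eqF.
      apply: ge1r_powR; last exact: ltW.
      by rewrite lt_def nz Dab_ge0 Dab_le1.
    have hdiff' : \sum_(a : P) \sum_(b : P) - (Dab U a b `^ alpha - Dab U a b) = 0.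
      under eq_bigr do rewrite sumrN.
      by rewrite sumrN hdiff oppr0.
    move=> a b.
    have h1 : \sum_(b : P) - (Dab U a b `^ alpha - Dab U a b) = 0.
      apply: (psumr_eq0P _ hdiff') => // a' _; apply: sumr_ge0 => b' _; exact: hneg.
    have : - (Dab U a b `^ alpha - Dab U a b) = 0.
      by apply: (psumr_eq0P _ h1) => // b' _; exact: hneg.
    by move/eqP; rewrite oppr_eq0 => /eqP.
split => // b.
have [a ha] : exists a, Dab U a b = 1.
  case: (pickP (fun a => Dab U a b == 1)) => [a /eqP ha | hn]; first by exists a.
  exfalso; have := sumD hdL b hU; rewrite big1 => [/eqP|a _].
    by rewrite eq_sym oner_eq0.
  have := hn a; case: (h01 a b) => -> //=.
  by rewrite eqxx.
have [s hs] := forward_b hU ha; by exists s, a.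
Qed.

End E.

Unset Implicit Arguments.

Theorem theorem1 (R : realType) (dL n : nat) (hdL : (2 <= dL)%N) (hn : (1 <= n)%N)
  (alpha : R) (halpha0 : 0 < alpha) (halpha1 : alpha != 1)
  (U : Mat R dL n) (hU : unitary U) :
  Halpha alpha U = 0 <-> clifford U.
Proof.
exact: (theorem1_gen hdL halpha0 halpha1 hU).
Qed.
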